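(* Let $n\geq 2$ and $0\leq s<\pi/4$. Then for the metric $g_{\pi/4,0}$, $$K_s(t)=\begin{cases}1,& 0\le|t|<\ell(s),\\ -1+4\sin^2(s)\,F(|t|,s)^{-4},& |t|>\ell(s),\end{cases}$$ where $\ell(s)=\arccos\big(\cos(\pi/4)/\cos(s)\big)$ and $F(t,s)=\cosh(t-\ell(s))+\sqrt{\cos(2s)}\,\sinh(t-\ell(s))$.
   Context: Fix $\varphi\in C^\infty(\mathbb{R})$ with $0\le\varphi\le1$, $\varphi(x)=0$ for $x\le0$, $\varphi(x)=1$ for $x\ge1$, and let $H$ be the Heaviside function ($H(x)=1$ for $x>0$, $H(x)=0$ for $x\le0$). For $r>0$, $\epsilon\ge0$ with $r+\epsilon<\pi/2$ and $\rho\ge0$ set $K^\parallel_{r,\epsilon}(\rho)=1-2\varphi((\rho-r)/\epsilon)$ if $\epsilon>0$ and $K^\parallel_{r,0}(\rho)=1-2H(\rho-r)$. Let $\mathcal{A}_{r,\epsilon}$ solve $\mathcal{A}''+K^\parallel_{r,\epsilon}\mathcal{A}=0$, $\mathcal{A}(0)=0$, $\mathcal{A}'(0)=1$ (for $\epsilon=0$: the unique $C^1$ function with these initial values solving the equation on $\rho\ne r$). Let $g_{r,\epsilon}=d\rho^2+\mathcal{A}_{r,\epsilon}(\rho)^2\mathring g$ on $\mathbb{R}^{n+1}$ in polar coordinates ($\mathring g$ the round metric on $S^n$). Every unit speed geodesic $\gamma$ lies in a 2-plane $\Sigma_\gamma$ through the origin. For $\mu=(s,r,\epsilon)$ with $s\ge0$,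 $\rho_\mu(t)$ denotes the radial coordinate $\rho(\gamma(t))$ of a unit speed geodesic whose minimal distance to the origin is $s$, attained at $t=0$: for $s>0$ it is the solution of $\rho''=\frac{\mathcal{A}_{r,\epsilon}'(\rho)}{\mathcal{A}_{r,\epsilon}(\rho)}(1-(\rho')^2)$, $\rho(0)=s$, $\rho'(0)=0$, and $\rho_{0,r,\epsilon}(t)=t$. Set $K^\perp_{r,\epsilon}(\rho)=\mathcal{A}_{r,\epsilon}(\rho)^{-2}\big(1-\mathcal{A}_{r,\epsilon}'(\rho)^2\big)$ and $K_{s,r,\epsilon}(t)=\rho_\mu'(t)^2K^\parallel_{r,\epsilon}(\rho_\mu(t))+(1-\rho_\mu'(t)^2)K^\perp_{r,\epsilon}(\rho_\mu(t))$; for $n\ge2$ this is the sectional curvature of the 2-plane spanned by $\gamma'(t)$ and a vector orthogonal to $\Sigma_\gamma$. Write $K_s=K_{s,\pi/4,0}$. *)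

(* Defs.v *)
From Stdlib Require Import Reals Lra.
Open Scope R_scope.

Definition heaviside (x : R) : R := if Rlt_dec 0 x then 1 else 0.

Definition Kpar0 (r rho : R) : R := 1 - 2 * heaviside (rho - r).

(* A_{r,0}: the C^1 function (with derivative dA) with A(0)=0, A'(0)=1
   solving A'' + K^par_{r,0} A = 0 away from rho = r.
   (Stated on all of R; the paper only uses rho >= 0.) *)
Definition is_A_r0 (r : R) (A dA : R -> R) : Prop :=
  (forall x, derivable_pt_lim A x (dA x)) /\
  (forall x, continuity_pt dA x) /\
  A 0 = 0 /\ dA 0 = 1 /\
  (forall x, x <> r -> derivable_pt_lim dA x (- Kpar0 r x * A x)).

Definition Kperp (A dA : R -> R) (rho : R) : R := (1 - dA rho ^ 2) / (A rho ^ 2).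

(* Radial coordinate rho_mu (with derivative drho) of the unit speed geodesic
   at minimal distance s from the origin, attained at t = 0.
   For s > 0: the solution of rho'' = (A'/A)(rho) (1 - rho'^2), rho(0)=s, rho'(0)=0.
   For s = 0 (geodesic through the origin): the radial coordinate |t|, with derivative sign t (taken = 1 at t = 0). *)
Definition is_rho_mu (A dA : R -> R) (s : R) (rho drho : R -> R) : Prop :=
  (0 < s /\
     (forall t, derivable_pt_lim rho t (drho t)) /\
     (forall t, derivable_pt_lim drho t (dA (rho t) / A (rho t) * (1 - drho t ^ 2))) /\
     rho 0 = s /\ drho 0 = 0)
  \/
  (s = 0 /\ forall t, rho t = Rabs t /\ drho t = (if Rlt_dec t 0 then -1 else 1)).

Definition Ksec (r : R) (A dA rho drho : R -> R) (t : R) : R :=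
  drho t ^ 2 * Kpar0 r (rho t) + (1 - drho t ^ 2) * Kperp A dA (rho t).

Definition ell (s : R) : R := acos (cos (PI / 4) / cos s).

Definition Ffun (t s : R) : R :=
  cosh (t - ell s) + sqrt (cos (2 * s)) * sinh (t - ell s).

(* Main.v *)
Require Import Defs.
From Stdlib Require Import Reals Lra.
From Coquelicot Require Import Coquelicot.
Open Scope R_scope.

Lemma const_lem (f : R -> R) a b : (forall x, Rmin a b < x < Rmax a b -> is_derive f x 0) -> (forall x, Rmin a b <= x <= Rmax a b -> continuity_pt f x) -> f b = f a.
Proof. intros H H0. destruct (MVT_gen f a b (fun _ => 0) H H0) as [c [_ Hc]]. lra. Qed.

Lemma der_cont f x d : is_derive f x d -> continuity_pt f x.
Proof. intro H. apply derivable_continuous_pt. exists d. now apply is_derive_Reals. Qed.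

Lemma Derive_of (f df : R -> R) t : (forall t, is_derive f t (df t)) -> Derive f t = df t.
Proof. intro H. apply is_derive_unique, H. Qed.

Lemma Derive_at (f:R->R) t d : is_derive f t d -> Derive (fun x:R => f x) t = d.
Proof. intro H. apply is_derive_unique, H. Qed.

Ltac cont_tac H H0 := repeat first [apply continuity_pt_opp | apply (fun x => derivable_continuous_pt _ x (derivable_pt_exp x)) | apply continuity_pt_plus | apply continuity_pt_mult | apply continuity_pt_minus | apply continuity_sin | apply continuity_cos | apply continuity_pt_const; intros ? ?; reflexivity | apply H | apply H0].

Lemma heav_pos x : 0 < x -> heaviside x = 1.
Proof. intro. unfold heaviside. destruct (Rlt_dec 0 x); lra. Qed.
Lemma heav_npos x : x <= 0 -> heaviside x = 0.
Proof. intro. unfold heaviside. destruct (Rlt_dec 0 x); lra. Qed.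

Lemma A_facts A dA (HA : is_A_r0 (PI/4) A dA) :
  (forall x, x <= PI/4 -> A x = sin x /\ dA x = cos x) /\
  (forall x, PI/4 <= x -> A x = / sqrt 2 * exp (x - PI/4) /\ dA x = / sqrt 2 * exp (x - PI/4)).
Proof.
  destruct HA as [HdA [Hc [H0 [H1 Hdd]]]].
  assert (HdA' : forall x, is_derive A x (dA x)) by (intro; apply is_derive_Reals; auto).
  assert (Hcont : forall x, continuity_pt A x) by (intro x; exact (der_cont _ _ _ (HdA' x))).
  assert (Hr : 0 < PI/4) by (generalize PI_RGT_0; lra).
  assert (low : forall x, x <= PI/4 -> A x = sin x /\ dA x = cos x).
  { intros x Hx.
    set (E := fun x => (A x - sin x) * (A x - sin x) + (dA x - cos x) * (dA x - cos x)).
    assert (E x = E 0).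
    { apply const_lem.
      - intros z Hz.
        assert (Hzr : z < PI/4) by (destruct Hz as [_ Hz]; unfold Rmax in Hz; destruct (Rle_dec 0 x); lra).
        assert (Hdz : is_derive dA z (- Kpar0 (PI/4) z * A z)) by (apply is_derive_Reals, Hdd; lra).
        unfold E. auto_derive.
        + repeat match goal with |- _ /\ _ => split end; (match goal with |- ex_derive (fun x => A x) _ => eexists; apply HdA' | |- ex_derive (fun x => dA x) _ => eexists; apply Hdz | _ => idtac end); auto.
        + rewrite (Derive_of _ _ _ HdA'). rewrite (Derive_at _ _ _ Hdz).
          unfold Kpar0. rewrite heav_npos by lra. ring.
      - intros z _. unfold E. cont_tac Hcont Hc. }
    unfold E in H. rewrite H0, H1, sin_0, cos_0 in H.
    assert (HH : Rsqr (A x - sin x) + Rsqr (dA x - cos x) = 0) by (unfold Rsqr; rewrite H; ring).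
    apply Rplus_sqr_eq_0 in HH. split; lra. }
  split; [exact low|].
  assert (Hs2 : sin (PI/4) = / sqrt 2) by (rewrite sin_PI4; field; apply Rgt_not_eq, sqrt_lt_R0; lra).
  assert (Hc2 : cos (PI/4) = / sqrt 2) by (rewrite cos_PI4; field; apply Rgt_not_eq, sqrt_lt_R0; lra).
  destruct (low (PI/4) (Rle_refl _)) as [Ar dAr].
  intros x Hx.
  assert (Hdd' : forall z, PI/4 < z -> is_derive dA z (A z)).
  { intros z Hz. apply is_derive_Reals.
    replace (A z) with (- Kpar0 (PI/4) z * A z). apply Hdd; lra.
    unfold Kpar0. rewrite heav_pos by lra. ring. }
  assert (P1 : (A x - dA x) * exp x = (A (PI/4) - dA (PI/4)) * exp (PI/4)).
  { apply (const_lem (fun y => (A y - dA y) * exp y)).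
    - intros z Hz.
      assert (Hzr : PI/4 < z) by (destruct Hz as [Hz _]; unfold Rmin in Hz; destruct (Rle_dec (PI/4) x); lra).
      auto_derive.
      + repeat match goal with |- _ /\ _ => split end; (match goal with |- ex_derive (fun x => A x) _ => eexists; apply HdA' | |- ex_derive (fun x => dA x) _ => eexists; apply Hdd'; auto | _ => idtac end); auto.
      + rewrite (Derive_of _ _ _ HdA'). rewrite (Derive_at _ _ _ (Hdd' z Hzr)). ring.
    - intros z _. cont_tac Hcont Hc. }
  assert (P2 : (A x + dA x) * exp (-x) = (A (PI/4) + dA (PI/4)) * exp (-(PI/4))).
  { apply (const_lem (fun y => (A y + dA y) * exp (-y))).
    - intros z Hz.
      assert (Hzr : PI/4 < z) by (destruct Hz as [Hz _]; unfold Rmin in Hz; destruct (Rle_dec (PI/4) x); lra).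
      auto_derive.
      + repeat match goal with |- _ /\ _ => split end; (match goal with |- ex_derive (fun x => A x) _ => eexists; apply HdA' | |- ex_derive (fun x => dA x) _ => eexists; apply Hdd'; auto | _ => idtac end); auto.
      + rewrite (Derive_of _ _ _ HdA'). rewrite (Derive_at _ _ _ (Hdd' z Hzr)). ring.
    - intros z _. apply continuity_pt_mult. apply continuity_pt_plus; auto.
      apply (der_cont _ _ (- exp (-z))). auto_derive; auto; ring. }
  rewrite Ar, dAr, Hs2, Hc2 in P1, P2.
  assert (Hex : 0 < exp x) by apply exp_pos.
  assert (Hxx : A x = dA x).
  { replace (/ sqrt 2 - / sqrt 2) with 0 in P1 by ring. rewrite Rmult_0_l in P1.
    apply Rmult_integral in P1. destruct P1; lra. }
  rewrite <- Hxx in P2 |- *. cut (A x = / sqrt 2 * exp (x - PI / 4)); [intro HH; split; exact HH|].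
  replace (x - PI/4) with (x + - (PI/4)) by ring. rewrite exp_plus.
  assert (exp (-x) * exp x = 1) by (rewrite <- exp_plus; replace (-x+x) with 0 by ring; apply exp_0).
  apply (Rmult_eq_reg_r (2 * exp (-x))). 2: { generalize (exp_pos (-x)); lra. }
  replace (A x * (2 * exp (- x))) with ((A x + A x) * exp (-x)) by ring. rewrite P2.
  replace (/ sqrt 2 * (exp x * exp (- (PI / 4))) * (2 * exp (- x))) with (/ sqrt 2 * 2 * exp (- (PI / 4)) * (exp (-x) * exp x)) by ring.
  rewrite H. ring.
Qed.

Lemma ex_der_cont (f : R -> R) x : ex_derive f x -> continuity_pt f x.
Proof. intro H. destruct H as [d H]. exact (der_cont _ _ _ H). Qed.

Ltac exd1 :=
  match goal with
  | |- ex_derive (fun x => ?f x) ?t =>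
      match goal with H : forall u : _, is_derive f u _ |- _ => exists (proj1_sig (exist _ _ (H t))); exact (H t) end
  | _ => idtac end.
Ltac exd HA Hr Hd := repeat match goal with |- _ /\ _ => split end; exd1; auto.

Section Geo.
Variables (A dA : R -> R) (HA : is_A_r0 (PI/4) A dA) (s : R) (Hs0 : 0 < s) (Hs1 : s < PI/4)
  (rho drho : R -> R) (Hr : forall t, is_derive rho t (drho t))
  (Hd : forall t, is_derive drho t (dA (rho t) / A (rho t) * (1 - drho t ^ 2)))
  (H0 : rho 0 = s) (H1 : drho 0 = 0).

Let HA' : forall x, is_derive A x (dA x).
Proof. intro; apply is_derive_Reals; apply HA. Qed.

Lemma PI4_pos : 0 < PI/4. Proof. generalize PI_RGT_0; lra. Qed.

Lemma Qcons : forall t, A (rho t) ^ 2 * (1 - drho t ^ 2) = sin s ^ 2.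
Proof.
  intro t.
  assert (D : forall z, is_derive (fun t => A (rho t) ^ 2 * (1 - drho t ^ 2)) z 0).
  { intro z. auto_derive.
    - exd HA' Hr Hd.
    - rewrite (Derive_at _ _ _ (HA' (rho z))), (Derive_at _ _ _ (Hr z)), (Derive_at _ _ _ (Hd z)).
      destruct (Req_dec (A (rho z)) 0) as [E|E].
      + rewrite E. ring.
      + field. auto. }
  rewrite (const_lem (fun t => A (rho t) ^ 2 * (1 - drho t ^ 2)) 0 t).
  - rewrite H0, H1. destruct (A_facts A dA HA) as [L _]. rewrite (proj1 (L s ltac:(lra))). ring.
  - intros; apply D.
  - intros; exact (der_cont _ _ _ (D x)).
Qed.


Let sins_pos : 0 < sin s.
Proof. apply sin_gt_0; generalize PI_RGT_0; lra. Qed.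

Let cont_rho : continuity rho.
Proof. intro x; exact (der_cont _ _ _ (Hr x)). Qed.

Lemma Apos : forall t, 0 <= t -> 0 < A (rho t).
Proof.
  intros t Ht.
  assert (NZ : forall z, A (rho z) <> 0).
  { intros z E. generalize (Qcons z). rewrite E. intro. nra. }
  destruct (Rlt_le_dec 0 (A (rho t))) as [h|h]; auto. exfalso.
  assert (h0 : 0 < A (rho 0)).
  { rewrite H0. destruct (A_facts A dA HA) as [L _]. rewrite (proj1 (L s ltac:(lra))). auto. }
  assert (Dg : forall x, is_derive (fun z => A (rho z)) x (dA (rho x) * drho x)).
  { intro x. auto_derive. exd HA' Hr Hd. repeat first [rewrite (Derive_at _ _ _ (HA' _)) | rewrite (Derive_of _ _ _ HA') | rewrite (Derive_at _ _ _ (Hr _)) | rewrite (Derive_of _ _ _ Hr)]; ring. }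
  destruct (IVT_cor (fun z => A (rho z)) 0 t) as [z [_ Hz]]; auto.
  - intro x. apply (der_cont (fun z => A (rho z)) _ (dA (rho x) * drho x)). apply Dg.
  - nra.
  - exact (NZ z Hz).
Qed.

Lemma rhopos : forall t, 0 <= t -> 0 < rho t.
Proof.
  intros t Ht. destruct (Rlt_le_dec 0 (rho t)) as [h|h]; auto. exfalso.
  destruct (IVT_cor rho 0 t) as [z [Hz1 Hz]]; auto.
  - rewrite H0. nra.
  - generalize (Apos z (proj1 Hz1)). rewrite Hz. destruct HA as [_ [_ [HA0 _]]]. lra.
Qed.

Lemma one_m_d : forall t, 0 < 1 - drho t ^ 2.
Proof.
  intro t. generalize (Qcons t). intro Q.
  destruct (Rlt_le_dec 0 (1 - drho t ^ 2)) as [h|h]; auto.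
  exfalso. assert (0 <= A (rho t) ^ 2) by (apply pow2_ge_0). nra.
Qed.

Lemma ddpos : forall t, 0 <= t -> 0 < dA (rho t) / A (rho t) * (1 - drho t ^ 2).
Proof.
  intros t Ht. apply Rmult_lt_0_compat; [|apply one_m_d].
  apply Rdiv_lt_0_compat; [|apply Apos; auto].
  destruct (A_facts A dA HA) as [L U].
  destruct (Rle_lt_dec (rho t) (PI/4)) as [h|h].
  - rewrite (proj2 (L _ h)). apply cos_gt_0. generalize (rhopos t Ht) PI_RGT_0; lra.
    generalize PI_RGT_0; lra.
  - rewrite (proj2 (U (rho t) ltac:(lra))). apply Rmult_lt_0_compat.
    apply Rinv_0_lt_compat, sqrt_lt_R0; lra. apply exp_pos.
Qed.

Lemma dinc : forall a b, 0 <= a < b -> drho a < drho b.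
Proof.
  intros a b Hab.
  destruct (MVT_gen drho a b (fun t => dA (rho t) / A (rho t) * (1 - drho t ^ 2))) as [c [Hc E]].
  - intros; apply Hd.
  - intros; exact (der_cont _ _ _ (Hd x)).
  - rewrite Rmin_left, Rmax_right in Hc by lra.
    generalize (ddpos c ltac:(lra)). nra.
Qed.

Lemma dpos : forall t, 0 < t -> 0 < drho t.
Proof. intros. rewrite <- H1. apply dinc. lra. Qed.

Lemma rinc_w : forall a b, 0 <= a <= b -> rho a <= rho b.
Proof.
  intros a b Hab. destruct (Req_dec a b) as [->|ne]; [lra|].
  destruct (MVT_gen rho a b drho) as [c [Hc E]].
  - intros; apply Hr.
  - intros; apply cont_rho.
  - rewrite Rmin_left, Rmax_right in Hc by lra.
    assert (0 <= drho c).
    { destruct (Req_dec c 0) as [->|]. lra. apply Rlt_le, dpos. lra. }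
    nra.
Qed.

Lemma rinc_s : forall a b, 0 < a < b -> rho a < rho b.
Proof.
  intros a b Hab.
  destruct (MVT_gen rho a b drho) as [c [Hc E]].
  - intros; apply Hr.
  - intros; apply cont_rho.
  - rewrite Rmin_left, Rmax_right in Hc by lra.
    generalize (dpos c ltac:(lra)). nra.
Qed.


Ltac subD HA' Hr Hd := repeat first [rewrite (Derive_at _ _ _ (HA' _)) | rewrite (Derive_of _ _ _ HA') | rewrite (Derive_at _ _ _ (Hr _)) | rewrite (Derive_of _ _ _ Hr) | rewrite (Derive_at _ _ _ (Hd _)) | rewrite (Derive_of _ _ _ Hd)].

Lemma sph : forall t, 0 <= t -> rho t <= PI/4 -> cos (rho t) = cos s * cos t.
Proof.
  intros t Ht Hrt.
  set (E := fun u => (cos (rho u) - cos s * cos u) ^ 2 + (- sin (rho u) * drho u + cos s * sin u) ^ 2).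
  assert (ED : forall z, ex_derive E z).
  { intro z. unfold E. auto_derive. exd HA' Hr Hd. }
  assert (E t = E 0).
  { apply const_lem.
    - intros z Hz. rewrite Rmin_left, Rmax_right in Hz by lra.
      assert (rz : 0 < rho z <= PI/4).
      { split. apply rhopos; lra. apply Rle_trans with (rho t); auto. apply rinc_w; lra. }
      destruct (A_facts A dA HA) as [L _]. destruct (L _ (proj2 rz)) as [La Ld].
      assert (sz : 0 < sin (rho z)) by (apply sin_gt_0; generalize PI_RGT_0; lra).
      unfold E. auto_derive. exd HA' Hr Hd.
      subD HA' Hr Hd. rewrite La, Ld. field. lra.
    - intros. apply ex_der_cont, ED. }
  unfold E in H. rewrite H0, H1, cos_0, sin_0 in H.
  assert (HH : Rsqr (cos (rho t) - cos s * cos t) + Rsqr (- sin (rho t) * drho t + cos s * sin t) = 0)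
    by (unfold Rsqr; rewrite <- !Rsqr_pow2 in H; unfold Rsqr in H; rewrite H; ring).
  apply Rplus_sqr_eq_0 in HH. lra.
Qed.

Let c := cos (PI/4).
Let cpos : 0 < cos s.
Proof. apply cos_gt_0; generalize PI_RGT_0; lra. Qed.
Let cs_gt : c < cos s.
Proof. unfold c. apply cos_decreasing_1; generalize PI_RGT_0; lra. Qed.
Let c_pos : 0 < c.
Proof. unfold c. apply cos_gt_0; generalize PI_RGT_0; lra. Qed.

Lemma cos_ell : cos (ell s) = c / cos s.
Proof. unfold ell. apply cos_acos. split. apply Rle_trans with 0. lra. apply Rlt_le, Rdiv_lt_0_compat; auto.
  apply Rmult_le_reg_r with (cos s); auto. unfold Rdiv. rewrite Rmult_assoc, Rinv_l by lra. lra. Qed.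

Lemma ell_bound : 0 < ell s <= PI.
Proof.
  split; [|apply acos_bound].
  destruct (acos_bound (c / cos s)) as [h _]. destruct h as [h|h]; auto.
  exfalso. generalize cos_ell. unfold ell. fold c. rewrite <- h, cos_0. intro E.
  assert (c = cos s) by (apply Rmult_eq_reg_r with (/ cos s); [|apply Rgt_not_eq, Rinv_0_lt_compat; auto];
    rewrite Rinv_r by lra; rewrite E; unfold Rdiv; reflexivity). lra.
Qed.

Lemma hit : forall z, 0 <= z <= ell s -> rho z = PI/4 -> z = ell s.
Proof.
  intros z Hz E. generalize (sph z (proj1 Hz) ltac:(lra)). rewrite E. fold c. intro Ec.
  apply cos_inj. generalize ell_bound; lra. generalize ell_bound; lra.
  rewrite cos_ell. rewrite Ec. field. lra.
Qed.

Lemma rell : rho (ell s) = PI/4.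
Proof.
  destruct ell_bound as [lb1 lb2].
  destruct (Rle_lt_dec (rho (ell s)) (PI/4)) as [h|h].
  - generalize (sph _ (Rlt_le _ _ lb1) h). rewrite cos_ell. intro E.
    apply cos_inj. generalize (rhopos (ell s) ltac:(lra)); generalize PI_RGT_0; lra.
    generalize PI_RGT_0; lra.
    rewrite E. fold c. field. lra.
  - exfalso.
    destruct (IVT_cor (fun u => rho u - PI/4) 0 (ell s)) as [z [Hz E]].
    + intro x. apply continuity_pt_minus. apply cont_rho. apply continuity_pt_const. intros ? ?; reflexivity.
    + lra.
    + rewrite H0. nra.
    + assert (rho z = PI/4) by lra. rewrite (hit z Hz H) in H. lra.
Qed.

Lemma dell : drho (ell s) = sqrt (cos (2 * s)).
Proof.
  destruct ell_bound as [lb1 lb2].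
  generalize (Qcons (ell s)). rewrite rell.
  destruct (A_facts A dA HA) as [L _]. rewrite (proj1 (L (PI/4) (Rle_refl _))).
  rewrite sin_PI4, cos_2a_sin. intro Q.
  assert (Hs2 : sqrt 2 * sqrt 2 = 2) by (apply sqrt_sqrt; lra).
  assert (sqrt 2 <> 0) by (apply Rgt_not_eq, sqrt_lt_R0; lra).
  assert (drho (ell s) ^ 2 = 1 - 2 * sin s * sin s).
  { replace ((1 / sqrt 2) ^ 2) with (/ 2) in Q. lra. field_simplify; auto. rewrite <- Rsqr_pow2. unfold Rsqr. rewrite Hs2. field. }
  rewrite <- H2. rewrite sqrt_pow2; auto. apply Rlt_le, dpos; auto.
Qed.


Lemma ratio1 : forall z, PI/4 <= rho z -> dA (rho z) / A (rho z) = 1.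
Proof.
  intros z h. destruct (A_facts A dA HA) as [_ U]. destruct (U _ h) as [Ua Ud].
  rewrite Ud, <- Ua. field. rewrite Ua. apply Rgt_not_eq, Rmult_lt_0_compat.
  apply Rinv_0_lt_compat, sqrt_lt_R0; lra. apply exp_pos.
Qed.

Lemma hyp : forall t, ell s <= t -> exp (rho t - PI/4) = Ffun t s.
Proof.
  intros t Ht. destruct ell_bound as [lb1 lb2].
  set (l := ell s) in *. set (k := sqrt (cos (2 * s))).
  set (u := fun z => exp (rho z - PI/4) - (cosh (z - l) + k * sinh (z - l))).
  set (v := fun z => drho z * exp (rho z - PI/4) - (sinh (z - l) + k * cosh (z - l))).
  assert (Hmono : forall z, l <= z -> PI/4 <= rho z).
  { intros z hz. rewrite <- rell. fold l. apply rinc_w. lra. }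
  assert (P : (u t - v t) * exp t = (u l - v l) * exp l).
  { apply (const_lem (fun z => (u z - v z) * exp z)).
    - intros z Hz. rewrite Rmin_left, Rmax_right in Hz by lra.
      unfold u, v, cosh, sinh. auto_derive. exd HA' Hr Hd.
      subD HA' Hr Hd. rewrite ratio1 by (apply Hmono; lra). field.
    - intros z _. apply ex_der_cont. unfold u, v, cosh, sinh. auto_derive. exd HA' Hr Hd. }
  assert (Q : (u t + v t) * exp (- t) = (u l + v l) * exp (- l)).
  { apply (const_lem (fun z => (u z + v z) * exp (- z))).
    - intros z Hz. rewrite Rmin_left, Rmax_right in Hz by lra.
      unfold u, v, cosh, sinh. auto_derive. exd HA' Hr Hd.
      subD HA' Hr Hd. rewrite ratio1 by (apply Hmono; lra). field.
    - intros z _. apply ex_der_cont. unfold u, v, cosh, sinh. auto_derive. exd HA' Hr Hd. }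
  assert (ul : u l = 0).
  { unfold u, l. rewrite rell. fold l. replace (PI/4 - PI/4) with 0 by ring. replace (l - l) with 0 by ring.
    unfold cosh, sinh. rewrite Ropp_0, exp_0. field. }
  assert (vl : v l = 0).
  { unfold v, l. rewrite rell, dell. fold l k. replace (PI/4 - PI/4) with 0 by ring. replace (l - l) with 0 by ring.
    unfold cosh, sinh. rewrite Ropp_0, exp_0. field. }
  rewrite ul, vl in P, Q.
  assert (e1 := exp_pos t). assert (e2 := exp_pos (-t)).
  assert (u t - v t = 0) by nra. assert (u t + v t = 0) by nra.
  assert (u t = 0) by lra. unfold u in H3. unfold Ffun. fold l. fold k. lra.
Qed.

Theorem geo_pos : forall t, 0 <= t ->
  (t < ell s -> Ksec (PI/4) A dA rho drho t = 1) /\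
  (t > ell s -> Ksec (PI/4) A dA rho drho t = -1 + 4 * sin s ^ 2 * / (Ffun t s ^ 4)).
Proof.
  intros t Ht. destruct ell_bound as [lb1 lb2].
  destruct (A_facts A dA HA) as [L U].
  split; intro h.
  - assert (rt : rho t <= PI/4) by (rewrite <- rell; apply rinc_w; lra).
    assert (rp := rhopos t Ht).
    assert (sz : 0 < sin (rho t)) by (apply sin_gt_0; generalize PI_RGT_0; lra).
    unfold Ksec, Kperp, Kpar0. rewrite heav_npos by lra. destruct (L _ rt) as [La Ld].
    rewrite La, Ld.
    assert (Hsc := sin2_cos2 (rho t)). rewrite !Rsqr_pow2 in Hsc.
    field_simplify; [|lra]. replace (cos (rho t) ^ 2) with (1 - sin (rho t) ^ 2) by lra. field. lra.
  - assert (rt : PI/4 < rho t) by (rewrite <- rell; apply rinc_s; lra).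
    assert (E := hyp t (Rlt_le _ _ h)).
    assert (Q := Qcons t).
    destruct (U _ (Rlt_le _ _ rt)) as [Ua Ud].
    unfold Ksec, Kperp, Kpar0. rewrite heav_pos by lra. rewrite Ud, <- Ua.
    rewrite E in Ua.
    assert (Hs2 : sqrt 2 * sqrt 2 = 2) by (apply sqrt_sqrt; lra).
    assert (sqrt 2 <> 0) by (apply Rgt_not_eq, sqrt_lt_R0; lra).
    assert (Fp : 0 < Ffun t s) by (rewrite <- E; apply exp_pos).
    assert (a2 : A (rho t) ^ 2 = Ffun t s ^ 2 / 2).
    { rewrite Ua. field_simplify; auto. rewrite <- (Rsqr_pow2 (sqrt 2)). unfold Rsqr. rewrite Hs2. field. }
    assert (d2 : drho t ^ 2 = 1 - sin s ^ 2 / A (rho t) ^ 2).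
    { assert (Anz : A (rho t) <> 0) by (rewrite Ua; apply Rgt_not_eq, Rmult_lt_0_compat; [apply Rinv_0_lt_compat, sqrt_lt_R0; lra | auto]).
      rewrite <- Q. field. auto. }
    rewrite d2, a2. field. lra.
Qed.

End Geo.

Theorem lemma2p2 (n : nat) (Hn : (2 <= n)%nat)
  (A dA : R -> R) (HA : is_A_r0 (PI / 4) A dA)
  (s : R) (Hs0 : 0 <= s) (Hs1 : s < PI / 4)
  (rho drho : R -> R) (Hrho : is_rho_mu A dA s rho drho) :
  forall t : R,
    (0 <= Rabs t < ell s -> Ksec (PI / 4) A dA rho drho t = 1) /\
    (Rabs t > ell s ->
       Ksec (PI / 4) A dA rho drho t = -1 + 4 * sin s ^ 2 * / (Ffun (Rabs t) s ^ 4)).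
Proof.
  intro t.
  destruct Hrho as [[sp [Hr [Hd [H0 H1]]]] | [s0 Hz]].
  - assert (Hr' : forall t, is_derive rho t (drho t)) by (intro; apply is_derive_Reals, Hr).
    assert (Hd' : forall t, is_derive drho t (dA (rho t) / A (rho t) * (1 - drho t ^ 2))) by (intro; apply is_derive_Reals, Hd).
    destruct (Rle_lt_dec 0 t) as [ht|ht].
    + rewrite Rabs_pos_eq by lra.
      destruct (geo_pos A dA HA s sp Hs1 rho drho Hr' Hd' H0 H1 t ht) as [G1 G2].
      split; intro h; [apply G1|apply G2]; lra.
    + rewrite Rabs_left by lra.
      set (rho2 := fun u => rho (- u)). set (drho2 := fun u => - drho (- u)).
      assert (Hr2 : forall u, is_derive rho2 u (drho2 u)).
      { intro u. unfold rho2, drho2. auto_derive. exd1. rewrite (Derive_at _ _ _ (Hr' _)). ring. }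
      assert (Hd2 : forall u, is_derive drho2 u (dA (rho2 u) / A (rho2 u) * (1 - drho2 u ^ 2))).
      { intro u. unfold rho2, drho2. auto_derive. exd1. rewrite (Derive_at _ _ _ (Hd' _)). ring. }
      assert (E : Ksec (PI/4) A dA rho2 drho2 (- t) = Ksec (PI/4) A dA rho drho t).
      { unfold Ksec, rho2, drho2. rewrite Ropp_involutive. ring. }
      rewrite <- E.
      assert (R0' : rho2 0 = s) by (unfold rho2; rewrite Ropp_0; auto).
      assert (R1' : drho2 0 = 0) by (unfold drho2; rewrite Ropp_0, H1; ring).
      destruct (geo_pos A dA HA s sp Hs1 rho2 drho2 Hr2 Hd2 R0' R1' (- t) ltac:(lra)) as [G1 G2].
      split; intro h; [apply G1|apply G2]; lra.
  - subst s. destruct (Hz t) as [Hrt Hdt].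
    assert (El : ell 0 = PI / 4).
    { unfold ell. rewrite cos_0. unfold Rdiv. rewrite Rinv_1, Rmult_1_r. apply acos_cos. generalize PI_RGT_0; lra. }
    rewrite El.
    assert (D : drho t ^ 2 = 1) by (rewrite Hdt; destruct (Rlt_dec t 0); ring).
    unfold Ksec, Kpar0. rewrite D, Hrt, sin_0. split; intro h.
    + rewrite heav_npos by lra. ring.
    + rewrite heav_pos by lra. ring.
Qed.
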